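(* Let $\mathcal{R}^{rsc}$ be a rich single-crossing domain and $F:\mathcal{R}^{rsc}\to\mathbb{Z}$ a strategy-proof mechanism. Then $F$ is monotone: for all $R',R''\in\mathcal{R}^{rsc}$ with $R'\prec R''$, $F(R')\le F(R'')$ (i.e. either $F(R')=F(R'')$ or both coordinates of $F(R')$ are strictly smaller than those of $F(R'')$). The same holds for mechanisms defined on a closed interval $[\underline R,\overline R]\subseteq\mathcal{R}^{rsc}$.
   Context: $\mathbb{Z}=[0,\infty)\times[0,1]$; $(t',q')<(t'',q'')$ means $t'<t''$ and $q'<q''$, and $x\le y$ means $x=y$ or $x<y$; $\square(z)=\{x:x\le z\}$. A classical preference is a complete transitive relation $R$ on $\mathbb{Z}$ (strict part $P$, indifference $I$) strictly decreasing in $t$ for fixed $q$, strictly increasing in $q$ for fixed $t$, with closed upper and lower contour sets $UC(R,z)=\{x:xRz\}$, $LC(R,z)=\{x:zRx\}$. Distinct classical preferences satisfy single-crossing if any indifference set of one meets any indifference set of the other in at most one point. A rich single-crossing domain $\mathcal{R}^{rsc}$ is a set of pairwise single-crossing classical preferences such that for all $x'<x''$ some member is indifferent between $x'$ and $x''$. For distinct members, $R'\prec R''$ means $\square(z)\cap UC(R'',z)\subseteq\square(z)\cap UC(R',z)$ for all $z\in\mathbb{Z}$; $\prec$ is a linear order. A mechanism is a map $F$ from the domain to $\mathbb{Z}$; it is strategy-proof if $F(R')\,R'\,F(R'')$ for all $R',R''$ in the domain. *)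

(* Defs.v *)
From Stdlib Require Import Reals.
Open Scope R_scope.

(* Consumption space Z = [0,oo) x [0,1]; a bundle is (t, q). *)
Definition bundle := (R * R)%type.
Definition inZ (z : bundle) : Prop := 0 <= fst z /\ 0 <= snd z <= 1.

Definition ltZ (x y : bundle) : Prop := fst x < fst y /\ snd x < snd y.
Definition leZ (x y : bundle) : Prop := x = y \/ ltZ x y.

(* A preference is a binary relation on bundles; "pref x y" reads x R y. *)
Definition pref := bundle -> bundle -> Prop.

Definition P_of (Rr : pref) (x y : bundle) : Prop := Rr x y /\ ~ Rr y x.
Definition I_of (Rr : pref) (x y : bundle) : Prop := Rr x y /\ Rr y x.

Definition closed_in_Z (S : bundle -> Prop) : Prop :=
  forall z, inZ z -> ~ S z ->
    exists eps, 0 < eps /\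
      forall x, inZ x -> Rabs (fst x - fst z) < eps -> Rabs (snd x - snd z) < eps -> ~ S x.

Definition UC (Rr : pref) (z : bundle) : bundle -> Prop := fun x => inZ x /\ Rr x z.
Definition LC (Rr : pref) (z : bundle) : bundle -> Prop := fun x => inZ x /\ Rr z x.

Definition classical (Rr : pref) : Prop :=
  (forall x y, inZ x -> inZ y -> Rr x y \/ Rr y x) /\
  (forall x y w, inZ x -> inZ y -> inZ w -> Rr x y -> Rr y w -> Rr x w) /\
  (forall t t' q, inZ (t, q) -> inZ (t', q) -> t < t' -> P_of Rr (t, q) (t', q)) /\
  (forall t q q', inZ (t, q) -> inZ (t, q') -> q < q' -> P_of Rr (t, q') (t, q)) /\
  (forall z, inZ z -> closed_in_Z (UC Rr z)) /\
  (forall z, inZ z -> closed_in_Z (LC Rr z)).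

Definition same_pref (R1 R2 : pref) : Prop :=
  forall x y, inZ x -> inZ y -> (R1 x y <-> R2 x y).

Definition single_crossing (R1 R2 : pref) : Prop :=
  forall z1 z2 x y, inZ z1 -> inZ z2 -> inZ x -> inZ y ->
    I_of R1 x z1 -> I_of R2 x z2 -> I_of R1 y z1 -> I_of R2 y z2 -> x = y.

Definition rich_single_crossing (D : pref -> Prop) : Prop :=
  (forall Rr, D Rr -> classical Rr) /\
  (forall R1 R2, D R1 -> D R2 -> ~ same_pref R1 R2 -> single_crossing R1 R2) /\
  (forall x y, inZ x -> inZ y -> ltZ x y -> exists Rr, D Rr /\ I_of Rr x y).

(* R' ≺ R'' (for distinct preferences):
   box(z) ∩ UC(R'',z) ⊆ box(z) ∩ UC(R',z) for all z in Z. *)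
Definition prec (R1 R2 : pref) : Prop :=
  ~ same_pref R1 R2 /\
  forall z x, inZ z -> inZ x -> leZ x z -> R2 x z -> R1 x z.

Definition strategy_proof (D : pref -> Prop) (F : pref -> bundle) : Prop :=
  (forall Rr, D Rr -> inZ (F Rr)) /\
  (forall R1 R2, D R1 -> D R2 -> R1 (F R1) (F R2)).

Definition monotone_on (D : pref -> Prop) (F : pref -> bundle) : Prop :=
  forall R1 R2, D R1 -> D R2 -> prec R1 R2 -> leZ (F R1) (F R2).

Definition interval (D : pref -> Prop) (Rlo Rhi : pref) : pref -> Prop :=
  fun Rr => D Rr /\ (same_pref Rlo Rr \/ prec Rlo Rr) /\ (same_pref Rr Rhi \/ prec Rr Rhi).

(* Main.v *)
Require Import Defs.
From Stdlib Require Import Reals Lra.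

Lemma P_trans (Rr : pref) x y w : classical Rr -> inZ x -> inZ y -> inZ w ->
  P_of Rr x y -> P_of Rr y w -> P_of Rr x w.
Proof.
  intros [_ [Htr _]] Hx Hy Hw [H1 H1'] [H2 H2']. split.
  - exact (Htr x y w Hx Hy Hw H1 H2).
  - intro H. apply H1'. exact (Htr y w x Hy Hw Hx H2 H).
Qed.

Lemma dom (Rr : pref) tx qx ty qy : classical Rr -> inZ (tx,qx) -> inZ (ty,qy) ->
  tx <= ty -> qy <= qx -> (tx,qx) <> (ty,qy) -> P_of Rr (tx,qx) (ty,qy).
Proof.
  intros Hc Hx Hy Ht Hq Hne.
  pose proof Hc as [_ [_ [Hdt [Hiq _]]]].
  unfold inZ in *; simpl in *.
  destruct (Req_dec tx ty) as [Et|Et]; destruct (Req_dec qx qy) as [Eq|Eq].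
  - subst; congruence.
  - subst. apply Hiq; unfold inZ; simpl; lra.
  - subst. apply Hdt; unfold inZ; simpl; lra.
  - apply P_trans with (tx,qy); auto; unfold inZ; simpl; try lra.
    + apply Hiq; unfold inZ; simpl; lra.
    + apply Hdt; unfold inZ; simpl; lra.
Qed.

Lemma core (R1 R2 : pref) a b : classical R1 -> classical R2 ->
  single_crossing R1 R2 -> prec R1 R2 -> inZ a -> inZ b ->
  R1 a b -> R2 b a -> leZ a b.
Proof.
  intros Hc1 Hc2 Hsc [_ Hpr] Ha Hb H1 H2.
  destruct a as [ta qa], b as [tb qb].
  destruct (Rlt_le_dec ta tb) as [Lt|Lt]; destruct (Rlt_le_dec qa qb) as [Lq|Lq].
  - right; split; simpl; lra.
  - exfalso. destruct (dom R2 ta qa tb qb Hc2 Ha Hb) as [_ N]; try lra.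
    + intro E; inversion E; lra.
    + auto.
  - exfalso. destruct (dom R1 tb qb ta qa Hc1 Hb Ha) as [_ N]; try lra.
    + intro E; inversion E; lra.
    + auto.
  - destruct (Req_dec ta tb) as [Et|Et]; destruct (Req_dec qa qb) as [Eq|Eq].
    + left; subst; reflexivity.
    + exfalso. destruct (dom R2 ta qa tb qb Hc2 Ha Hb) as [_ N]; try lra.
      * intro E; inversion E; lra.
      * auto.
    + exfalso. destruct (dom R1 tb qb ta qa Hc1 Hb Ha) as [_ N]; try lra.
      * intro E; inversion E; lra.
      * auto.
    + exfalso.
      assert (Hba : leZ (tb,qb) (ta,qa)) by (right; split; simpl; lra).
      assert (H1' : R1 (tb,qb) (ta,qa)) by (apply Hpr; auto).
      pose proof Hc1 as [Hcm1 [Htr1 [Hdt1 _]]].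
      pose proof Hc2 as [Hcm2 [Htr2 [_ [_ [_ Hlc2]]]]].
      assert (NR : ~ R2 (ta,qa) (tb,qb)).
      { intro H3. assert (Haa1 : R1 (ta,qa) (ta,qa)) by (destruct (Hcm1 _ _ Ha Ha); auto).
        assert (Haa2 : R2 (ta,qa) (ta,qa)) by (destruct (Hcm2 _ _ Ha Ha); auto).
        assert (E := Hsc (ta,qa) (ta,qa) (tb,qb) (ta,qa) Ha Ha Hb Ha).
        assert ((tb,qb) = (ta,qa)) as E' by (apply E; split; auto).
        inversion E'; lra. }
      destruct (Hlc2 (ta,qa) Ha (tb,qb) Hb) as [eps [Heps Hcl]].
      { intros [_ H]; auto. }
      set (d := Rmin (eps/2) ((ta-tb)/2)).
      assert (Hd1 : 0 < d) by (unfold d; apply Rmin_pos; lra).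
      assert (Hd2 : d <= eps/2) by apply Rmin_l.
      assert (Hd3 : d <= (ta-tb)/2) by apply Rmin_r.
      unfold inZ in Ha, Hb; simpl in Ha, Hb.
      assert (Hb' : inZ (tb+d, qb)) by (unfold inZ; simpl; lra).
      assert (N' : ~ R2 (ta,qa) (tb+d,qb)).
      { intro H. apply (Hcl (tb+d,qb) Hb'); simpl.
        - rewrite Rabs_right; lra.
        - replace (qb - qb) with 0 by ring. rewrite Rabs_R0; lra.
        - split; auto. }
      assert (R2b : R2 (tb+d,qb) (ta,qa)).
      { destruct (Hcm2 (tb+d,qb) (ta,qa) Hb' Ha); tauto. }
      assert (R1b : R1 (tb+d,qb) (ta,qa)).
      { apply Hpr; auto. right; split; simpl; lra. }
      destruct (Hdt1 tb (tb+d) qb Hb Hb') as [_ NP]; [lra|].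
      apply NP. apply (Htr1 _ (ta,qa) _ Hb'); auto; unfold inZ; simpl; lra.
Qed.

Theorem mainTheorem4 (D : pref -> Prop) :
  rich_single_crossing D ->
  (forall F : pref -> bundle, strategy_proof D F -> monotone_on D F) /\
  (forall (Rlo Rhi : pref) (F : pref -> bundle), D Rlo -> D Rhi ->
     strategy_proof (interval D Rlo Rhi) F -> monotone_on (interval D Rlo Rhi) F).
Proof.
  intros [Hcl [Hsc _]]. split.
  - intros F [Hin Hsp] R1 R2 D1 D2 Hp.
    apply (core R1 R2 (F R1) (F R2)); auto.
    + apply Hsc; auto. apply Hp.
    + apply Hsp; auto.
    + apply Hsp; auto.
  - intros Rlo Rhi F _ _ [Hin Hsp] R1 R2 D1 D2 Hp.
    apply (core R1 R2 (F R1) (F R2)); auto.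
    + apply Hcl, D1.
    + apply Hcl, D2.
    + apply Hsc; [apply D1|apply D2|apply Hp].
    + apply Hsp; auto.
    + apply Hsp; auto.
Qed.
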